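(* Let $f:\mathbb{R}^M\times\mathbb{R}^m\to\mathbb{R}^N$ be twice differentiable in $\boldsymbol{\theta}\in\mathbb{R}^m$, let $(\mathbf{x}_i,\mathbf{y}_i)_{i=1}^n$ be training data, and let $\varepsilon>0$, $M_0>0$. Suppose $\|f(\mathbf{x}_i,\boldsymbol{\theta})-\mathbf{y}_i\|_2<\varepsilon$ for all $i$, and $|\theta_j|^2\,\|\partial^2 f(\mathbf{x}_i,\boldsymbol{\theta})/\partial\theta_j^2\|_2<M_0$ for all $i$ and all $j\in\{1,\dots,m\}$. Then $$S_{\mathrm{adaptive}}(\boldsymbol{\theta})=\frac1n\sum_{i=1}^n\sum_{j=1}^m|\theta_j|^2\,\Big\|\frac{\partial f(\mathbf{x}_i,\boldsymbol{\theta})}{\partial\theta_j}\Big\|_2^2+O(\varepsilon),$$ where the implied constant depends only on $m$ and $M_0$.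
   Context: The loss is the MSE loss $L(\boldsymbol{\theta})=\frac1n\sum_{i=1}^n\frac12\|f(\mathbf{x}_i,\boldsymbol{\theta})-\mathbf{y}_i\|_2^2$. The elementwise-adaptive sharpness is $S_{\mathrm{adaptive}}(\boldsymbol{\theta})=\operatorname{Tr}\big(\nabla^2_{\boldsymbol{\theta}}L(\boldsymbol{\theta})\odot|\boldsymbol{\theta}||\boldsymbol{\theta}|^{T}\big)$, where $|\boldsymbol{\theta}|$ is the entrywise absolute value of the parameter vector and $\odot$ is the entrywise (Hadamard) product; equivalently $S_{\mathrm{adaptive}}(\boldsymbol{\theta})=\sum_{j=1}^m|\theta_j|^2\,\partial^2L/\partial\theta_j^2$. *)

(* Defs.v *)
From HB Require Import structures.
From mathcomp Require Import all_boot all_order all_algebra.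
From mathcomp Require Import all_classical all_reals all_analysis.
Set Implicit Arguments. Unset Strict Implicit. Unset Printing Implicit Defensive.
Import Order.TTheory GRing.Theory Num.Theory.
Import numFieldNormedType.Exports.
Local Open Scope ring_scope.

Definition norm2 {R : realType} {N : nat} (v : 'rV[R]_N) : R :=
  Num.sqrt (\sum_(k < N) (v 0 k) ^+ 2).

Definition basis_vec {R : realType} {m : nat} (j : 'I_m) : 'rV[R]_m :=
  delta_mx 0 j.

Definition pderiv {R : realType} {m : nat} {V : normedModType R}
  (g : 'rV[R]_m -> V) (j : 'I_m) (theta : 'rV[R]_m) : V :=
  'D_(basis_vec j) g theta.

Definition hessian {R : realType} {m : nat} (g : 'rV[R]_m -> R)
  (theta : 'rV[R]_m) : 'M[R]_m :=
  \matrix_(j < m, k < m) pderiv (pderiv g k) j theta.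

Definition mse_loss {R : realType} {M m N n : nat}
  (f : 'rV[R]_M -> 'rV[R]_m -> 'rV[R]_N)
  (x : 'I_n -> 'rV[R]_M) (y : 'I_n -> 'rV[R]_N) (theta : 'rV[R]_m) : R :=
  n%:R^-1 * \sum_(i < n) 2^-1 * (norm2 (f (x i) theta - y i)) ^+ 2.

Definition S_adaptive {R : realType} {M m N n : nat}
  (f : 'rV[R]_M -> 'rV[R]_m -> 'rV[R]_N)
  (x : 'I_n -> 'rV[R]_M) (y : 'I_n -> 'rV[R]_N) (theta : 'rV[R]_m) : R :=
  \tr (\matrix_(j < m, k < m)
         (hessian (mse_loss f x y) theta j k * (`|theta 0 j| * `|theta 0 k|))).

Definition twice_differentiable {R : realType} {m : nat} {W : normedModType R}
  (g : 'rV[R]_m -> W) : Prop :=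
  (forall t, differentiable g t) /\
  (forall (v : 'rV[R]_m) t, differentiable (fun s => 'D_v g s) t).

(* Main.v *)
Require Import Defs.
From HB Require Import structures.
From mathcomp Require Import all_boot all_order all_algebra.
From mathcomp Require Import all_classical all_reals all_analysis.
From mathcomp Require Import ring lra.
Import Order.TTheory GRing.Theory Num.Theory.
Import numFieldNormedType.Exports.
Local Open Scope ring_scope.

Set Implicit Arguments.
Section H.
Context {R : realType} {m : nat}.
Local Notation V := 'rV[R]_m.

Lemma comp_is_derive N (h : V -> 'rV[R]_N) t v k :
  derivable h t v -> is_derive t v (fun s => h s 0 k) ('D_v h t 0 k).
Proof.
move=> dh; split; first by move/derivable_mxP: dh; apply.
by rewrite (derive_mx dh) mxE.
Qed.

Lemma is_derive_sumL n (h : 'I_n -> V -> R) x v dh :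
  (forall i, is_derive x v (h i) (dh i)) ->
  is_derive x v (fun t => \sum_(i < n) h i t) (\sum_(i < n) dh i).
Proof. by move=> H; rewrite -fct_sumE; exact: is_derive_sum. Qed.

Lemma is_deriveM' (f g : V -> R) x v df dg :
  is_derive x v f df -> is_derive x v g dg ->
  is_derive x v (fun t => f t * g t) (f x * dg + g x * df).
Proof. move=> ? ?; exact: is_deriveM. Qed.

Lemma is_deriveCM (f : V -> R) c x v df :
  is_derive x v f df -> is_derive x v (fun t => c * f t) (c * df).
Proof.
move=> H; have := @is_deriveM' (cst c) f x v 0 df (is_derive_cst _ _ _) H.
by rewrite mulr0 addr0.
Qed.

Lemma is_deriveBc (f : V -> R) c x v df :
  is_derive x v f df -> is_derive x v (fun t => f t - c) df.
Proof.
move=> H; have := @is_deriveB _ _ _ f (cst c) x v df 0 H (is_derive_cst _ _ _).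
by rewrite subr0.
Qed.

Lemma is_deriveX2 (f : V -> R) x v df :
  is_derive x v f df -> is_derive x v (fun t => f t ^+ 2) (2 * f x * df).
Proof.
move=> H; have -> : (fun t => f t ^+ 2) = (fun t => f t * f t).
  by apply/funext => t; rewrite expr2.
have := is_deriveM' H H.
by rewrite -mulrA mulr2n mulrDl !mul1r.
Qed.

Lemma cs N (a b : 'I_N -> R) :
  (\sum_k a k * b k) ^+ 2 <= (\sum_k a k ^+ 2) * (\sum_k b k ^+ 2).
Proof.
have H : 0 <= \sum_k \sum_l (a k * b l - a l * b k) ^+ 2.
  by apply: sumr_ge0 => k _; apply: sumr_ge0 => l _; exact: sqr_ge0.
have E : \sum_k \sum_l (a k * b l - a l * b k) ^+ 2 =
  2 * ((\sum_k a k ^+ 2) * (\sum_k b k ^+ 2) - (\sum_k a k * b k) ^+ 2).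
  transitivity (\sum_k \sum_l (a k ^+ 2 * b l ^+ 2 + a l ^+ 2 * b k ^+ 2
                  - 2 * (a k * b k * (a l * b l)))).
    by apply: eq_bigr => k _; apply: eq_bigr => l _; ring.
  under eq_bigr => k _ do rewrite sumrB big_split.
  rewrite sumrB big_split /= [X in _ + X - _]exchange_big /=.
  rewrite expr2 !big_distrlr /=.
  under [X in _ + _ - X = _]eq_bigr => k _ do rewrite -mulr_sumr.
  rewrite -mulr_sumr; ring.
move: H; rewrite E pmulr_rge0 // subr_ge0 //.
Qed.

Lemma cs_norm N (a b : 'I_N -> R) :
  `|\sum_k a k * b k| <= Num.sqrt (\sum_k a k ^+ 2) * Num.sqrt (\sum_k b k ^+ 2).
Proof.
have ha : 0 <= \sum_k a k ^+ 2 by apply: sumr_ge0 => k _; exact: sqr_ge0.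
have hb : 0 <= \sum_k b k ^+ 2 by apply: sumr_ge0 => k _; exact: sqr_ge0.
by rewrite -sqrtrM // -sqrtr_sqr ler_sqrt ?cs // mulr_ge0.
Qed.

End H.
Arguments is_derive_sumL {R m n h x v dh}.
Arguments is_deriveCM {R m f} c {x v df}.
Arguments is_deriveBc {R m f} c {x v df}.
Arguments is_deriveX2 {R m f x v df}.
Arguments is_deriveM' {R m f g x v df dg}.
Arguments comp_is_derive {R m N h t v} k.

Theorem lemma4 (R : realType) (m : nat) (M0 : R) :
  0 < M0 ->
  exists C : R,
  forall (M N n : nat) (f : 'rV[R]_M -> 'rV[R]_m -> 'rV[R]_N)
         (x : 'I_n -> 'rV[R]_M) (y : 'I_n -> 'rV[R]_N)
         (theta : 'rV[R]_m) (eps : R),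
    0 < eps ->
    (forall z : 'rV[R]_M, twice_differentiable (f z)) ->
    (forall i : 'I_n, norm2 (f (x i) theta - y i) < eps) ->
    (forall (i : 'I_n) (j : 'I_m),
        `|theta 0 j| ^+ 2 * norm2 (pderiv (pderiv (f (x i)) j) j theta) < M0) ->
    `| S_adaptive f x y theta
       - n%:R^-1 * \sum_(i < n) \sum_(j < m)
            `|theta 0 j| ^+ 2 * (norm2 (pderiv (f (x i)) j theta)) ^+ 2 |
    <= C * eps.
Proof.
move=> M0pos; exists (m%:R * M0).
move=> M N n f x y theta eps eps0 Htd Hres Hhess.
have dg : forall i t v, derivable (f (x i)) t v.
  by move=> i t v; apply: diff_derivable; exact: (Htd (x i)).1.
have ddg : forall i v w t, derivable (fun s => 'D_v (f (x i)) s) t w.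
  by move=> i v w t; apply: diff_derivable; exact: (Htd (x i)).2.
pose L' := fun t => n%:R^-1 * \sum_(i < n) 2^-1 *
   \sum_(k < N) (f (x i) t 0 k - y i 0 k) ^+ 2.
have HL : mse_loss f x y = L'.
  apply/funext => t; rewrite /mse_loss /L' /norm2; congr (_ * _).
  apply: eq_bigr => i _; rewrite sqr_sqrtr; last first.
    by apply: sumr_ge0 => k _; exact: sqr_ge0.
  by congr (_ * _); apply: eq_bigr => k _; rewrite !mxE.
pose D1 := fun (j : 'I_m) t => n%:R^-1 * \sum_(i < n) \sum_(k < N)
   (f (x i) t 0 k - y i 0 k) * ('D_(basis_vec j) (f (x i)) t 0 k).
have HD1 : forall j t, is_derive t (basis_vec j) L' (D1 j t).
  move=> j t.
  have X := is_deriveCM (n%:R^-1) (is_derive_sumL (fun i =>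
     is_deriveCM (2^-1) (is_derive_sumL (fun k =>
       is_deriveX2 (is_deriveBc (y i 0 k) (comp_is_derive k (dg i t (basis_vec j)))))))).
  apply: is_derive_eq X _.
  rewrite /D1; congr (_ * _); apply: eq_bigr => i _.
  rewrite mulr_sumr; apply: eq_bigr => k _.
  rewrite mulrA mulrA mulVf ?mul1r //.
have HP : forall j, pderiv L' j = D1 j.
  by move=> j; apply/funext => t; rewrite /pderiv; exact: (HD1 j t).(derive_val).
pose dd := fun (i : 'I_n) (j : 'I_m) (k : 'I_N) =>
  'D_(basis_vec j) (fun s => 'D_(basis_vec j) (f (x i)) s) theta 0 k.
pose d := fun (i : 'I_n) (j : 'I_m) (k : 'I_N) =>
  'D_(basis_vec j) (f (x i)) theta 0 k.
pose c := fun (i : 'I_n) (k : 'I_N) => f (x i) theta 0 k - y i 0 k.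
have HD2 : forall j, is_derive theta (basis_vec j) (D1 j)
    (n%:R^-1 * \sum_(i < n) \sum_(k < N) (c i k * dd i j k + d i j k * d i j k)).
  move=> j.
  exact: (is_deriveCM (n%:R^-1) (is_derive_sumL (fun i =>
     is_derive_sumL (fun k => is_deriveM'
       (is_deriveBc (y i 0 k) (comp_is_derive k (dg i theta (basis_vec j))))
       (comp_is_derive k (ddg i (basis_vec j) (basis_vec j) theta)))))).
have HS : S_adaptive f x y theta = \sum_(j < m)
   (n%:R^-1 * \sum_(i < n) \sum_(k < N) (c i k * dd i j k + d i j k * d i j k))
     * (`|theta 0 j| * `|theta 0 j|).
  rewrite /S_adaptive /mxtrace; apply: eq_bigr => j _.
  rewrite [LHS]mxE; congr (_ * _); rewrite /hessian [LHS]mxE HL HP /pderiv.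
  by rewrite (HD2 j).(derive_val).
have HT : forall i j, norm2 (pderiv (f (x i)) j theta) ^+ 2 =
    \sum_(k < N) d i j k * d i j k.
  move=> i j; rewrite /norm2 sqr_sqrtr; last first.
    by apply: sumr_ge0 => k _; exact: sqr_ge0.
  by apply: eq_bigr => k _; rewrite expr2.
have HS2 : S_adaptive f x y theta = n%:R^-1 * \sum_(i < n) \sum_(j < m)
    `|theta 0 j| ^+ 2 * (\sum_(k < N) c i k * dd i j k
                        + \sum_(k < N) d i j k * d i j k).
  rewrite HS.
  transitivity (\sum_(j < m) \sum_(i < n) n%:R^-1 * (`|theta 0 j| ^+ 2 *
      (\sum_(k < N) c i k * dd i j k + \sum_(k < N) d i j k * d i j k))).
    apply: eq_bigr => j _; rewrite -mulrA mulr_suml mulr_sumr.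
    apply: eq_bigr => i _; rewrite -big_split /=; ring.
  rewrite exchange_big /= mulr_sumr; apply: eq_bigr => i _.
  by rewrite mulr_sumr.
have key : S_adaptive f x y theta - n%:R^-1 * \sum_(i < n) \sum_(j < m)
            `|theta 0 j| ^+ 2 * (norm2 (pderiv (f (x i)) j theta)) ^+ 2
   = n%:R^-1 * \sum_(i < n) \sum_(j < m)
       `|theta 0 j| ^+ 2 * \sum_(k < N) c i k * dd i j k.
  rewrite HS2 -mulrBr -sumrB; congr (_ * _); apply: eq_bigr => i _.
  rewrite -sumrB; apply: eq_bigr => j _; rewrite HT; ring.
rewrite key.
have Hb : forall i j, `| `|theta 0 j| ^+ 2 * \sum_(k < N) c i k * dd i j k |
                        <= eps * M0.
  move=> i j; rewrite normrM ger0_norm ?sqr_ge0 //.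
  apply: le_trans (ler_wpM2l (sqr_ge0 _) (cs_norm _ _)) _.
  have -> : Num.sqrt (\sum_k c i k ^+ 2) = norm2 (f (x i) theta - y i).
    by rewrite /norm2; congr Num.sqrt; apply: eq_bigr => k _; rewrite !mxE.
  have Hd := Hhess i j.
  have Hr := Hres i.
  rewrite mulrCA; apply: ler_pM.
  - by rewrite /norm2 sqrtr_ge0.
  - by apply: mulr_ge0; [exact: sqr_ge0| rewrite sqrtr_ge0].
  - exact: ltW.
  - exact: ltW.
rewrite normrM ger0_norm ?invr_ge0 ?ler0n //.
apply: (le_trans (ler_wpM2l _ (ler_norm_sum _ _ _))).
  by rewrite invr_ge0 ler0n.
apply: (le_trans (ler_wpM2l _ (ler_sum _ (fun i _ =>
   le_trans (ler_norm_sum _ _ _) (ler_sum _ (fun j _ => Hb i j)))))).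
  by rewrite invr_ge0 ler0n.
rewrite !sumr_const !card_ord.
have [->|n0] := eqVneq n 0%N.
  rewrite invr0 mul0r; apply: mulr_ge0; last exact: ltW.
  by apply: mulr_ge0; [rewrite ler0n | exact: ltW].
rewrite -[eps * M0 *+ m *+ n]mulr_natl mulKf ?pnatr_eq0 // -mulr_natr.
rewrite le_eqVlt; apply/orP; left; apply/eqP; ring.
Qed.
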